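(* Let $A,B\in\mathcal{B}_F$ and $1\le p\le\infty$. Then $d_p(\pi(A),\pi(B))\le 2\,d_p(A,B)$.
   Context: A persistence barcode is a finite multiset of intervals $[x,y]$, $x\le y$; $\mathcal{B}_F$ is the set of barcodes all of whose intervals have finite endpoints. The projection $\pi$ sends $A=\{[x_i^a,y_i^a]\}$ to $\pi(A)=\{[0,y_i^a-x_i^a]\}$. $p$-th Wasserstein distance: pad the smaller barcode with zero-length intervals $[t,t]$ until both have $n_{\max}=\max\{n_a,n_b\}$ intervals; $d_p(A,B)=\big(\min_\gamma\sum_i\max\{|x_i^a-x^b_{\gamma(i)}|^p,|y_i^a-y^b_{\gamma(i)}|^p\}\big)^{1/p}$ for $p<\infty$, $d_\infty(A,B)=\min_\gamma\max_i\max\{|x_i^a-x^b_{\gamma(i)}|,|y_i^a-y^b_{\gamma(i)}|\}$, minima over bijections $\gamma$ (and paddings). *)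

(* Defs.v *)
From HB Require Import structures.
From mathcomp Require Import all_boot all_order all_algebra all_fingroup.
From mathcomp Require Import all_classical all_reals.
From mathcomp Require Import ereal exp.
Set Implicit Arguments. Unset Strict Implicit. Unset Printing Implicit Defensive.
Import Order.TTheory GRing.Theory Num.Theory.
Local Open Scope ring_scope.

Section Barcodes.
Variable R : realType.

(* An interval [x,y] is a pair (x,y); a barcode in B_F is a finite multiset
   of intervals with finite endpoints and x <= y, represented as a list. *)
Definition barcode (A : seq (R * R)) : bool := all (fun u => u.1 <= u.2) A.

Definition bproj (A : seq (R * R)) : seq (R * R) :=
  [seq (0, u.2 - u.1) | u <- A].

Definition nmax (A B : seq (R * R)) : nat := maxn (size A) (size B).

Definition pad (A : seq (R * R)) (ts : seq R) : seq (R * R) :=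
  A ++ [seq (t, t) | t <- ts].

Definition pcost (p : R) (u v : R * R) : R :=
  Num.max (`|u.1 - v.1| `^ p) (`|u.2 - v.2| `^ p).
Definition icost (u v : R * R) : R :=
  Num.max `|u.1 - v.1| `|u.2 - v.2|.

Definition costs_fin (p : R) (A B : seq (R * R)) : set R :=
  [set c | exists (ta tb : seq R) (g : 'S_(nmax A B)),
     [/\ size ta = (nmax A B - size A)%N, size tb = (nmax A B - size B)%N &
       c = \sum_(i < nmax A B)
             pcost p (nth (0,0) (pad A ta) i) (nth (0,0) (pad B tb) (g i))]].

Definition costs_inf (A B : seq (R * R)) : set R :=
  [set c | exists (ta tb : seq R) (g : 'S_(nmax A B)),
     [/\ size ta = (nmax A B - size A)%N, size tb = (nmax A B - size B)%N &
       c = \big[Num.max/0]_(i < nmax A B)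
             icost (nth (0,0) (pad A ta) i) (nth (0,0) (pad B tb) (g i))]].

(* p-th Wasserstein distance, p in [1, +oo] (the -oo branch is never used);
   the minimum is taken as an infimum. *)
Definition dW (p : \bar R) (A B : seq (R * R)) : R :=
  match p with
  | EFin r => (inf (costs_fin r A B)) `^ r^-1
  | +oo%E => inf (costs_inf A B)
  | -oo%E => 0
  end.

End Barcodes.

(* Main.v *)
Require Import Defs.
From HB Require Import structures.
From mathcomp Require Import all_boot all_order all_algebra all_fingroup.
From mathcomp Require Import all_classical all_reals.
From mathcomp Require Import ereal exp.
From mathcomp Require Import ring lra.
Import Order.TTheory GRing.Theory Num.Theory.
Local Open Scope ring_scope.

Section Aux.
Variable R : realType.

Definition fproj (u : R * R) : R * R := (0, u.2 - u.1).

Lemma bproj_size (A : seq (R * R)) : size (bproj A) = size A.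
Proof. exact: size_map. Qed.

Lemma pad_bproj (A : seq (R * R)) (ta : seq R) :
  pad (bproj A) (nseq (size ta) 0) = map fproj (pad A ta).
Proof.
rewrite /pad /bproj map_cat -map_comp; congr (_ ++ _).
by elim: ta => //= t ta ->; rewrite /fproj /= subrr.
Qed.

Lemma nth_pad (A : seq (R * R)) (ta : seq R) i :
  nth (0,0) (pad (bproj A) (nseq (size ta) 0)) i = fproj (nth (0,0) (pad A ta) i).
Proof.
rewrite pad_bproj; case: (ltnP i (size (pad A ta))) => h.
  by rewrite (nth_map (0,0)).
by rewrite !nth_default ?size_map // /fproj /= subrr.
Qed.

Lemma key (u v : R * R) :
  `|(fproj u).2 - (fproj v).2| <= 2 * icost u v.
Proof.
rewrite /fproj /icost /=.
rewrite (_ : u.2 - u.1 - (v.2 - v.1) = (u.2 - v.2) - (u.1 - v.1)); last by ring.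
apply: le_trans (ler_normB _ _) _.
rewrite -[2]/(1 *+ 2) mulr_natl mulr2n lerD // le_max lexx ?orbT //.
Qed.

Lemma pcost_proj r (u v : R * R) : 0 < r ->
  pcost r (fproj u) (fproj v) <= 2 `^ r * pcost r u v.
Proof.
move=> r0; rewrite {1}/pcost /= subrr normr0 powR0 ?gt_eqF //.
rewrite (max_r (powR_ge0 _ _)).
apply: le_trans (ge0_ler_powR (ltW r0) _ _ (key u v)) _; rewrite ?nnegrE //.
  by rewrite mulr_ge0 // le_max normr_ge0.
rewrite powRM ?le_max ?normr_ge0 //; apply: ler_wpM2l; first exact: powR_ge0.
rewrite /icost /pcost; case: (leP `|u.1 - v.1| `|u.2 - v.2|) => hab.
  by rewrite le_max lexx orbT.
by rewrite le_max lexx.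
Qed.

Lemma icost_proj (u v : R * R) :
  icost (fproj u) (fproj v) <= 2 * icost u v.
Proof.
rewrite {1}/icost /= subrr normr0 (max_r (normr_ge0 _)); exact: key.
Qed.

Lemma costs_fin_proj r (A B : seq (R * R)) c : 0 < r ->
  costs_fin r A B c -> exists c', costs_fin r (bproj A) (bproj B) c' /\ c' <= 2 `^ r * c.
Proof.
move=> r0 [ta [tb [g [hta htb ->]]]].
exists (\sum_(i < nmax A B) pcost r (fproj (nth (0,0) (pad A ta) i))
                                   (fproj (nth (0,0) (pad B tb) (g i)))); split.
  rewrite /costs_fin /nmax !bproj_size.
  exists (nseq (size ta) 0), (nseq (size tb) 0), g; split; rewrite ?size_nseq //.
  by apply: eq_bigr => i _; rewrite !nth_pad.
by rewrite mulr_sumr; apply: ler_sum => i _; apply: pcost_proj.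
Qed.

Lemma costs_inf_proj (A B : seq (R * R)) c :
  costs_inf A B c -> exists c', costs_inf (bproj A) (bproj B) c' /\ c' <= 2 * c.
Proof.
move=> [ta [tb [g [hta htb ->]]]].
exists (\big[Num.max/0]_(i < nmax A B) icost (fproj (nth (0,0) (pad A ta) i))
                                   (fproj (nth (0,0) (pad B tb) (g i)))); split.
  rewrite /costs_inf /nmax !bproj_size.
  exists (nseq (size ta) 0), (nseq (size tb) 0), g; split; rewrite ?size_nseq //.
  by apply: eq_bigr => i _; rewrite !nth_pad.
apply: (big_ind2 (fun x y => x <= 2 * y)); first by rewrite mulr0.
  move=> x1 x2 y1 y2 h1 h2; rewrite ge_max; apply/andP; split.
    by apply: le_trans h1 _; rewrite ler_wpM2l // le_max lexx.
  by apply: le_trans h2 _; rewrite ler_wpM2l // le_max lexx orbT.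
by move=> i _; apply: icost_proj.
Qed.

Lemma costs_fin_ne r (A B : seq (R * R)) : nonempty (costs_fin r A B).
Proof.
eexists; exists (nseq (nmax A B - size A) 0), (nseq (nmax A B - size B) 0), 1%g.
split; [exact: size_nseq | exact: size_nseq | reflexivity].
Qed.

Lemma costs_inf_ne (A B : seq (R * R)) : nonempty (costs_inf A B).
Proof.
eexists; exists (nseq (nmax A B - size A) 0), (nseq (nmax A B - size B) 0), 1%g.
split; [exact: size_nseq | exact: size_nseq | reflexivity].
Qed.

Lemma costs_fin_ge0 r (A B : seq (R * R)) : lbound (costs_fin r A B) 0.
Proof.
move=> c [ta [tb [g [_ _ ->]]]]; apply: sumr_ge0 => i _.
by rewrite /pcost le_max powR_ge0.
Qed.

Lemma costs_inf_ge0 (A B : seq (R * R)) : lbound (costs_inf A B) 0.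
Proof.
move=> c [ta [tb [g [_ _ ->]]]].
apply: (big_ind (fun x => 0 <= x)) => //.
  by move=> x y hx hy; rewrite le_max hx.
by move=> i _; rewrite /icost le_max normr_ge0.
Qed.

Lemma inf_scale (S1 S2 : set R) k : 0 < k -> nonempty S2 ->
  lbound S1 0 -> lbound S2 0 ->
  (forall c, S2 c -> exists c', S1 c' /\ c' <= k * c) ->
  [/\ 0 <= inf S1, 0 <= inf S2 & inf S1 <= k * inf S2].
Proof.
move=> k0 ne2 lb1 lb2 H.
have hl1 : has_lbound S1 by exists 0.
have ne1 : nonempty S1.
  by case: ne2 => c /H [c' [hc' _]]; exists c'.
split; first exact: lb_le_inf.
  exact: lb_le_inf.
rewrite -ler_pdivrMl //; apply: lb_le_inf => // c /H [c' [hc' le]].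
rewrite ler_pdivrMl //; apply: le_trans le; exact: ge_inf.
Qed.

End Aux.

Theorem lemma3 (R : realType) (p : \bar R) (A B : seq (R * R)) :
  barcode A -> barcode B -> (1%:E <= p)%E ->
  dW p (bproj A) (bproj B) <= 2 * dW p A B.
Proof.
move=> _ _; case: p => [r||] hp //=.
  have r1 : 1 <= r by rewrite lee_fin in hp.
  have r0 : 0 < r by lra.
  have [h1 h2 h3] := @inf_scale R (costs_fin r (bproj A) (bproj B)) (costs_fin r A B)
    (2 `^ r) (powR_gt0 _ (ltr0Sn _ 1)) (@costs_fin_ne R r A B) (@costs_fin_ge0 R r _ _)
    (@costs_fin_ge0 R r _ _) (fun c => @costs_fin_proj R r A B c r0).
  have ri : 0 <= r^-1 by rewrite invr_ge0 ltW.
  have h0 : 0 <= 2 `^ r * inf (costs_fin r A B) by rewrite mulr_ge0 // powR_ge0.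
  apply: le_trans (ge0_ler_powR ri _ _ h3) _; rewrite ?nnegrE //.
  rewrite powRM ?powR_ge0 // -powRrM mulfV ?gt_eqF // powRr1 //.
have [h1 h2 h3] := @inf_scale R (costs_inf (bproj A) (bproj B)) (costs_inf A B)
  2 (ltr0Sn _ 1) (@costs_inf_ne R A B) (@costs_inf_ge0 R _ _)
  (@costs_inf_ge0 R _ _) (@costs_inf_proj R A B).
exact: h3.
Qed.
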